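(* For every integer $\ell\ge 3$, every graph $G$ with no induced cycle of length at least $\ell$ satisfies $\mathrm{cop}(G)\le \ell-2$.
   Context: All graphs are finite, undirected, without loops or multiple edges. Cops and Robber game on a connected graph: for an integer $k\ge 1$, the cop player places $k$ cops on (not necessarily distinct) vertices, then the robber is placed on a vertex; then, starting with the cops, the players alternate moves. In a cop move, each cop either stays or moves to an adjacent vertex; in a robber move, the robber stays or moves to an adjacent vertex. The cops win if at some point a cop and the robber occupy the same vertex. Both players have complete information. The cop number $\mathrm{cop}(G)$ of a connected graph $G$ is the smallest $k$ such that the cops have a winning strategy with $k$ cops; for a non-connected graph it is the maximum cop number of its connected components. *)

(* Defs.v *)
(* A finite simple graph is a symmetric irreflexive relation
   e : rel T on a finType T. *)
From mathcomp Require Import all_boot.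
Set Implicit Arguments. Unset Strict Implicit. Unset Printing Implicit Defensive.

Section CopsRobber.
Variables (T : finType) (e : rel T).

Definition induced_cycle (s : seq T) : Prop :=
  [/\ 3 <= size s, uniq s &
      forall (x0 : T) i j, i < size s -> j < size s ->
        e (nth x0 s i) (nth x0 s j) =
        (j == (i.+1) %% size s) || (i == (j.+1) %% size s)].

Definition cop_move (k : nat) (c c' : {ffun 'I_k -> T}) : Prop :=
  forall i, c' i = c i \/ e (c i) (c' i).

Definition robber_move (r r' : T) : Prop := r' = r \/ e r r'.

Definition caught (k : nat) (c : {ffun 'I_k -> T}) (r : T) : Prop :=
  exists i, c i = r.

(* cop_win c r : it is the cops' turn, cops at c, robber at r (not caught);
   the cops can force a capture (least fixed point = finite-time win). *)
Inductive cop_win (k : nat) : {ffun 'I_k -> T} -> T -> Prop :=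
| CopWin c r c' :
    cop_move c c' ->
    (caught c' r \/
     (forall r', robber_move r r' -> caught c' r' \/ cop_win c' r')) ->
    cop_win c r.

(* k cops win on the connected component S: the cops choose initial positions
   in S, then the robber chooses a vertex of S, then the cops move first. *)
Definition cops_win_on (k : nat) (S : {set T}) : Prop :=
  exists c : {ffun 'I_k -> T}, (forall i, c i \in S) /\
    forall r, r \in S -> caught c r \/ cop_win c r.

Definition component (v : T) : {set T} := [set u | connect e v u].

Definition is_cop_number_on (S : {set T}) (n : nat) : Prop :=
  [/\ 1 <= n, cops_win_on n S & forall k, 1 <= k < n -> ~ cops_win_on k S].

(* cop(G) <= m : the cop number of every connected component is at most m
   (the cop number of G is the maximum over its components). *)
Definition cop_number_le (m : nat) : Prop :=
  forall v : T, exists2 n, n <= m & is_cop_number_on (component v) n.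

End CopsRobber.

(* Main.v *)
Require Import Defs.
From mathcomp Require Import all_boot.
From mathcomp Require Import zify.
From Stdlib Require Import Classical.
Set Implicit Arguments. Unset Strict Implicit. Unset Printing Implicit Defensive.

Section Proof.
Variables (T : finType) (e : rel T) (x0 : T).
Hypothesis esym : symmetric e.
Hypothesis eirr : irreflexive e.

Definition ipath (s : seq T) : Prop :=
  uniq s /\ forall i j, i < size s -> j < size s ->
    e (nth x0 s i) (nth x0 s j) = (j == i.+1) || (i == j.+1).

Ltac solve_idx :=
  repeat match goal with |- context [if ?a == ?b then _ else _] => case: (a =P b) => ? end;
  do ![case: eqP => ?] => //; lia.

Lemma modS n i : i < n -> i.+1 %% n = if i.+1 == n then 0 else i.+1.
Proof. by move=> h; case: eqP => [->|h2]; [rewrite modnn | rewrite modn_small; lia]. Qed.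

Lemma cat_cycle A B : ipath A -> ipath B -> 0 < size A -> 1 < size B ->
  (forall y, y \in A -> y \notin B) ->
  (forall i j, i < size A -> j < size B -> e (nth x0 A i) (nth x0 B j) =
      ((i == (size A).-1) && (j == 0)) || ((i == 0) && (j == (size B).-1))) ->
  induced_cycle e (A ++ B).
Proof.
move=> [uA hA] [uB hB] sA sB dis cr; split.
- rewrite size_cat; lia.
- rewrite cat_uniq uA uB /= andbT; apply/hasPn => y yB; apply/negP => yA.
  by move: (dis _ yA); rewrite yB.
move=> y0 i j hi hj.
rewrite (set_nth_default x0 y0 hi) (set_nth_default x0 y0 hj) !nth_cat.
rewrite (modS hi) (modS hj); rewrite size_cat in hi hj *.
case: ltnP => hiA; case: ltnP => hjA.
- rewrite hA //. solve_idx.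
- rewrite cr //; last by lia. solve_idx.
- rewrite esym cr //; last by lia. solve_idx.
- rewrite hB //; try lia. solve_idx.
Qed.


Definition walk (Y : pred T) u x (q : seq T) : Prop :=
  [/\ 1 < size q, nth x0 q 0 = u, nth x0 q (size q).-1 = x,
      forall i, i.+1 < size q -> e (nth x0 q i) (nth x0 q i.+1) &
      forall i, 0 < i -> i.+1 < size q -> Y (nth x0 q i)].

Lemma walk_short Y u x q a b : walk Y u x q -> 0 < a <= b -> b < size q ->
  e (nth x0 q a.-1) (nth x0 q b) -> walk Y u x (take a q ++ drop b q).
Proof.
move=> [s1 h0 hl he hY] hab hb hc.
have sta : size (take a q) = a by rewrite size_take ifT //; lia.
have sz : size (take a q ++ drop b q) = a + (size q - b).
  by rewrite size_cat sta size_drop.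
split; rewrite ?sz.
- lia.
- rewrite nth_cat sta ifT ?nth_take //; lia.
- rewrite nth_cat sta ifF; last lia.
  by rewrite nth_drop -hl; congr nth; lia.
- move=> i hi; rewrite !nth_cat sta.
  case: (ltnP i.+1 a) => h2.
  + rewrite !ifT ?nth_take //; try lia; apply: he; lia.
  + case: (ltnP i a) => h3.
    * have ei : i = a.-1 by lia.
      rewrite nth_take // nth_drop (_ : b + (i.+1 - a) = b); last lia.
      by rewrite ei.
    * rewrite !nth_drop (_ : b + (i.+1 - a) = (b + (i - a)).+1); last lia.
      apply: he; lia.
- move=> i hi0 hi; rewrite nth_cat sta.
  case: ltnP => h2.
  + rewrite nth_take //; apply: hY; lia.
  + rewrite nth_drop; apply: hY; lia.
Qed.

Lemma walk_min Y u x q : walk Y u x q -> u != x ->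
  (forall q', walk Y u x q' -> size q <= size q') -> ipath q.
Proof.
move=> w ux mn; have [s1 h0 hl he hY] := w.
have noshort : forall a b, 0 < a -> a < b -> b < size q ->
    ~~ e (nth x0 q a.-1) (nth x0 q b).
  move=> a b ha hab hb; apply/negP => hc.
  have := mn _ (walk_short w (a:=a) (b:=b) _ hb hc).
  rewrite size_cat size_take size_drop; case: ifP; lia.
have nochord : forall i j, i.+1 < j -> j < size q -> ~~ e (nth x0 q i) (nth x0 q j).
  move=> i j hij hj; exact: (noshort i.+1 j).
have neq : forall i j, i < j -> j < size q -> nth x0 q i != nth x0 q j.
  move=> i j hij hj; apply/negP => /eqP eij.
  case: (posnP i) => hi.
  - subst i; case: (ltnP j.+1 (size q)) => hj2.
    + have := noshort 1 j.+1 isT; rewrite ltnS /= eij => /(_ hij hj2).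
      by rewrite he.
    + have : j = (size q).-1 by lia.
      by move=> ej; move: ux; rewrite -h0 -hl eij ej eqxx.
  - have := noshort i j hi hij hj; rewrite -eij.
    by rewrite (_ : i = i.-1.+1) ?he //; lia.
split.
- apply/(uniqP x0) => i j; rewrite !inE => hi hj eij.
  case: (ltngtP i j) => // h.
  + by move: (neq i j h hj); rewrite eij eqxx.
  + by move: (neq j i h hi); rewrite eij eqxx.
move=> i j hi hj.
case: (ltngtP i j) => h.
- case: (eqVneq j i.+1) => [ej|hne].
  + by subst j; rewrite he ?eqxx.
  + rewrite (negbTE (nochord _ _ _ hj)); last lia.
    do ![case: eqP => ?] => //; lia.
- case: (eqVneq i j.+1) => [ej|hne].
  + by subst i; rewrite esym he ?eqxx ?orbT.
  + rewrite esym (negbTE (nochord _ _ _ hi)); last lia.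
    do ![case: eqP => ?] => //; lia.
- subst j; rewrite eirr; do ![case: eqP => ?] => //; lia.
Qed.


Lemma walk_minex Y u x : (exists q, walk Y u x q) ->
  exists q, walk Y u x q /\ forall q', walk Y u x q' -> size q <= size q'.
Proof.
move=> [q w].
suff : forall n q, size q <= n -> walk Y u x q ->
  exists q, walk Y u x q /\ forall q', walk Y u x q' -> size q <= size q'.
  by move/(_ _ q (leqnn _) w).
elim=> [|n IH] q0 hq w0.
- by case: w0 => h; lia.
- case: (classic (exists q', walk Y u x q' /\ size q' < size q0)).
  + move=> [q' [w' h']]; apply: (IH q') => //; lia.
  + move=> nex; exists q0; split => // q' w'.
    rewrite leqNgt; apply/negP => h; apply: nex; by exists q'.
Qed.

Lemma path_all (f : rel T) (Y : pred T) a p :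
  (forall y z, f y z -> Y z) -> path f a p -> all Y p.
Proof.
move=> hf; elim: p a => //= z p IH a /andP[fz pz].
by rewrite (hf _ _ fz) (IH z).
Qed.

Lemma walk_exists (f : rel T) Y u x a b :
  (forall y z, f y z -> e y z && Y z) ->
  e u a -> e b x -> Y a -> connect f a b -> exists q, walk Y u x q.
Proof.
move=> hf ua bx Ya /connectP[p hp hb].
exists (u :: rcons (a :: p) x); split.
- by rewrite /= size_rcons.
- by [].
- by rewrite /= size_rcons /= nth_rcons /= ltnn eqxx.
- move=> i hi; have : path e u (rcons (a :: p) x).
    rewrite rcons_path /= ua -hb bx andbT.
    by apply: sub_path hp => y z /hf /andP[].
  by move/(pathP x0)/(_ i); apply; move: hi; rewrite /= size_rcons.
- move=> i hi0 hi; rewrite /= size_rcons in hi.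
  have -> : nth x0 (u :: rcons (a :: p) x) i = nth x0 (rcons (a :: p) x) i.-1.
    by case: i hi0 {hi}.
  rewrite nth_rcons ifT; last by rewrite /=; lia.
  have : all Y (a :: p) by rewrite /= Ya (path_all (Y := Y) _ hp) // => y z /hf /andP[].
  move/allP; apply; apply: mem_nth; rewrite /=; lia.
Qed.

Lemma cycle_of (P : seq T) u x (Y : pred T) :
  ipath P -> 0 < size P ->
  (forall y, Y y -> forall i, i < size P -> (nth x0 P i != y) && ~~ e (nth x0 P i) y) ->
  x \notin P -> u \notin P -> u != x ->
  (forall i, i < size P -> e (nth x0 P i) x = (i == 0)) ->
  (forall i, i < size P -> e (nth x0 P i) u = (i == (size P).-1)) ->
  (exists q, walk Y u x q) ->
  exists s, induced_cycle e s /\ (size P).+2 <= size s.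
Proof.
move=> iP sP hY xP uP ux hx hu /walk_minex[q [w mn]].
have iq := walk_min w ux mn.
have [s1 h0 hl he hYq] := w.
exists (P ++ q); split; last by rewrite size_cat; lia.
apply: cat_cycle => //.
- move=> y yP; apply/negP => /(nthP x0)[j hj ej].
  have {}hj : j < size q := hj.
  case: (posnP j) => hj0.
  + by subst j; move: uP; rewrite -h0 ej yP.
  case: (ltnP j.+1 (size q)) => hj1.
  + move: yP => /(nthP x0)[i hi ei].
    by move: (hY _ (hYq j hj0 hj1) i hi); rewrite ej ei eqxx.
  + have : j = (size q).-1 by rewrite -subn1; lia.
    by move=> ejj; move: xP; rewrite -hl -ejj ej yP.
- move=> i j hi hj.
  case: (posnP j) => hj0.
  + subst j; rewrite h0 hu //; do ![case: eqP => ?] => //; lia.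
  case: (ltnP j.+1 (size q)) => hj1.
  + have /andP[_ /negbTE ->] := hY _ (hYq j hj0 hj1) i hi.
    do ![case: eqP => ?] => //; lia.
  + have ejj : j = (size q).-1 by rewrite -subn1; lia.
    rewrite ejj hl hx //; do ![case: eqP => ?] => //; lia.
Qed.


Lemma ipath_rcons P u : ipath P -> u \notin P ->
  (forall j, j < size P -> e (nth x0 P j) u = (j == (size P).-1)) ->
  ipath (rcons P u).
Proof.
move=> [uP hP] uNP hu; split; first by rewrite rcons_uniq uNP.
move=> i j; rewrite size_rcons !nth_rcons => hi hj.
case: ltnP => h1; case: ltnP => h2.
- by rewrite hP.
- rewrite ifT; last lia. rewrite hu //. solve_idx.
- rewrite ifT; last lia. rewrite esym hu //. solve_idx.
- rewrite !ifT; try lia. have -> : i = j by lia. rewrite eirr. solve_idx.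
Qed.

Lemma ipath_behead P : ipath P -> ipath (behead P).
Proof.
move=> [uP hP]; split; first by rewrite -drop1 drop_uniq.
move=> i j; rewrite size_behead !nth_behead => hi hj.
rewrite hP; try lia; try solve_idx.
Qed.

Lemma ipath_take n P : ipath P -> ipath (take n P).
Proof.
move=> [uP hP]; split; first by rewrite take_uniq.
move=> i j; rewrite size_take => hi hj.
rewrite !nth_take; try (case: ifP hi hj; lia).
rewrite hP //; case: ifP hi hj; lia.
Qed.

Definition NP (P : seq T) (y : T) : bool := has (fun p => (p == y) || e p y) P.
Definition eP P : rel T := fun y z => [&& e y z, ~~ NP P y & ~~ NP P z].
Definition region P r : {set T} := [set y | connect (eP P) r y].

Lemma NP_nth P y : reflect (exists2 i, i < size P & (nth x0 P i == y) || e (nth x0 P i) y) (NP P y).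
Proof. exact: has_nthP. Qed.

Lemma NP_of P y i : i < size P -> (nth x0 P i == y) || e (nth x0 P i) y -> NP P y.
Proof. by move=> hi h; apply/NP_nth; exists i. Qed.

Lemma eP_sym P : symmetric (eP P).
Proof. by move=> y z; rewrite /eP esym; case: (NP P y); case: (NP P z); rewrite ?andbF. Qed.

Lemma connect_inv (f : rel T) (A : pred T) a b :
  (forall y z, A y -> f y z -> A z) -> connect f a b -> A a -> A b.
Proof.
move=> h /connectP[p hp ->]; elim: p a hp => //= z p IH a /andP[fz pz] Aa.
exact: IH pz (h _ _ Aa fz).
Qed.

Lemma region_notNP P r y : ~~ NP P r -> y \in region P r -> ~~ NP P y.
Proof.
move=> hr; rewrite inE => hy; apply: (connect_inv (A := fun y => ~~ NP P y)) hy hr.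
by move=> a b _ /and3P[].
Qed.

Lemma region_closed P r y z : ~~ NP P r -> y \in region P r -> e y z -> ~~ NP P z ->
  z \in region P r.
Proof.
move=> hr hy hyz hz; have hy' := region_notNP hr hy.
move: hy; rewrite !inE => hy; apply: connect_trans hy (connect1 _).
by rewrite /eP hyz hy' hz.
Qed.

Lemma boundary P r y x : ~~ NP P r -> y \in region P r -> e y x -> NP P x ->
  x \notin P /\ exists2 i, i < size P & e (nth x0 P i) x.
Proof.
move=> hr hy hyx hx; have hy' := region_notNP hr hy.
have xP : x \notin P.
  apply/negP => xP; move: hy'; rewrite /NP; apply/negP/negPn/hasP.
  by exists x => //; rewrite esym hyx orbT.
split => //; move/NP_nth: hx => [i hi /orP[/eqP ex|ex]]; last by exists i.
by move: xP; rewrite -ex mem_nth.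
Qed.

Lemma region_sub P r P' r' : ~~ NP P r ->
  (forall y x, y \in region P r -> e y x -> NP P x -> NP P' x) ->
  r' \in region P r -> region P' r' \subset region P r.
Proof.
move=> hr bnd hr'; apply/subsetP => z; rewrite inE => hz.
apply: (connect_inv (A := fun z => z \in region P r)) hz hr'.
move=> a b ha /and3P[hab _ hb].
apply: (region_closed hr ha hab); apply/negP => hb'.
by move: hb; rewrite (bnd _ _ ha hab hb').
Qed.

Lemma bnd_exists (A : {set T}) a b : connect e a b -> a \notin A -> b \in A ->
  exists y x, [/\ y \in A, x \notin A & e y x].
Proof.
move=> /connectP[p hp ->]; elim: p a hp => /= [a _ h1 h2|z p IH a /andP[az pz] ha hb].
  by rewrite h2 in h1.
case: (boolP (z \in A)) => hz.
- by exists z, a; rewrite esym.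
- exact: (IH z pz hz hb).
Qed.


Variable k : nat.

Definition place (P : seq T) : {ffun 'I_k -> T} := [ffun i : 'I_k => nth (last x0 P) P i].

Lemma place_nth P (i : 'I_k) : 0 < size P -> place P i = nth x0 P (minn i (size P).-1).
Proof.
move=> sP; rewrite ffunE; case: (ltnP i (size P)) => h.
- rewrite (set_nth_default x0) //; congr nth; rewrite -subn1; lia.
- rewrite nth_default // -nth_last; congr nth; rewrite -subn1; lia.
Qed.

Lemma capture P r : size P <= k -> NP P r ->
  caught (place P) r \/ cop_win e (place P) r.
Proof.
move=> sk /NP_nth[i hi h].
have hik : i < k by lia.
have hpl : place P (Ordinal hik) = nth x0 P i.
  by rewrite place_nth /=; [congr nth; rewrite -subn1; lia | lia].
case/orP: h => [/eqP h|h].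
- by left; exists (Ordinal hik); rewrite hpl.
- right; apply: (CopWin (c' := [ffun j => if j == Ordinal hik then r else place P j])).
  + move=> j; rewrite ffunE; case: eqP => [->|_]; [right; by rewrite hpl | by left].
  + by left; exists (Ordinal hik); rewrite ffunE eqxx.
Qed.

Definition Inv v0 P r := [/\ ipath P, 0 < size P <= k, ~~ NP P r,
  (forall p, p \in P -> connect e v0 p) & connect e v0 r].

Definition meas P r := #|region P r| * k.+1 + size P.

Lemma step v0 P r P' : Inv v0 P r -> cop_move e (place P) (place P') ->
  ipath P' -> 0 < size P' -> size P' <= k ->
  (forall p, p \in P' -> connect e v0 p) ->
  (forall y x, y \in region P r -> e y x -> NP P x -> NP P' x) ->
  (forall r', r' \in region P r -> ~~ NP P' r' -> meas P' r' < meas P r) ->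
  (forall r', meas P' r' < meas P r -> Inv v0 P' r' -> cop_win e (place P') r') ->
  cop_win e (place P) r.
Proof.
move=> [iP /andP[sP sPk] hr cP cr] mv iP' sP' sPk' cP' bnd hm IH.
apply: (CopWin (c' := place P')) => //; right => r' hmv.
case: (boolP (NP P' r')) => h'; first exact: capture.
have r'R : r' \in region P r.
  case: hmv => [->|hrr']; first by rewrite inE connect0.
  have hnp : ~~ NP P r'.
    apply/negP => hn; move: h'; rewrite (bnd r) //; by rewrite inE connect0.
  rewrite inE; apply: connect1; by rewrite /eP hrr' hr hnp.
right; apply: IH; first exact: hm.
split => //; first by rewrite sP'.
case: hmv => [->//|hrr']; apply: connect_trans cr (connect1 hrr').
Qed.

Lemma meas_lt P r P' r' u y : ~~ NP P r ->
  (forall y x, y \in region P r -> e y x -> NP P x -> NP P' x) ->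
  r' \in region P r -> ~~ NP P' r' -> u \in P' -> y \in region P r -> e y u ->
  size P' <= k -> meas P' r' < meas P r.
Proof.
move=> hr bnd hr' h' uP' hy hyu sk.
have : region P' r' \proper region P r.
  apply/properP; split; first exact: region_sub bnd hr'.
  exists y => //; apply/negP => hy'.
  have := region_notNP h' hy'; rewrite /NP; apply/negP/negPn/hasP.
  by exists u => //; rewrite esym hyu orbT.
move/proper_card; rewrite /meas => hc; nia.
Qed.


Lemma meas_le P r P' r' : ~~ NP P r ->
  (forall y x, y \in region P r -> e y x -> NP P x -> NP P' x) ->
  r' \in region P r -> size P' < size P -> meas P' r' < meas P r.
Proof.
move=> hr bnd hr' hs; have := subset_leq_card (region_sub hr bnd hr').
rewrite /meas => hc; nia.
Qed.

Hypothesis nocyc : forall s, induced_cycle e s -> size s < k.+2.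

Lemma strategy v0 n : forall P r, meas P r < n -> Inv v0 P r -> cop_win e (place P) r.
Proof.
elim: n => [|n IHn] P r hmeas //.
move=> hI; have [iP /andP[sP sPk] hr cP cr] := hI.
have IH : forall P' r', meas P' r' < meas P r -> Inv v0 P' r' -> cop_win e (place P') r'.
  move=> P' r' h; apply: IHn; lia.
clear IHn hmeas.
have cPi : forall i, i < size P -> connect e v0 (nth x0 P i).
  by move=> i hi; apply: cP; apply: mem_nth.
case: (classic (exists u y, [/\ y \in region P r, e y u, e (nth x0 P (size P).-1) u &
   forall j, j < (size P).-1 -> ~~ e (nth x0 P j) u])) => [[u [y [hy hyu hhu hpriv]]]|hnex].
- have uNP : NP P u.
    by apply: (NP_of (i := (size P).-1)); [rewrite -subn1; lia | rewrite hhu orbT].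
  have [uP _] := boundary hr hy hyu uNP.
  have hu : forall j, j < size P -> e (nth x0 P j) u = (j == (size P).-1).
    move=> j hj; case: eqP => [->//|hne]; apply/negbTE/hpriv; rewrite -subn1 in hne *; lia.
  have iPu := ipath_rcons iP uP hu.
  have cu : connect e v0 u.
    by apply: connect_trans (cPi _ _) (connect1 hhu); rewrite -subn1; lia.
  case: (ltnP (size P) k) => htk.
  + apply: (step (P' := rcons P u)) hI _ iPu _ _ _ _ _ (IH _).
    * move=> i; rewrite !place_nth ?size_rcons // nth_rcons /=.
      case: (ltnP i (size P)) => hi.
      - left; rewrite ifT; last by lia.
        congr nth; rewrite -subn1; lia.
      - right; rewrite ifF; last lia. rewrite ifT; last (apply/eqP; lia).
        rewrite (_ : minn i (size P).-1 = (size P).-1) //; rewrite -subn1; lia.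
    * by rewrite size_rcons.
    * by rewrite size_rcons.
    * by move=> p; rewrite mem_rcons inE => /orP[/eqP->|/cP].
    * by move=> y' x _ _; rewrite /NP has_rcons => ->; rewrite orbT.
    * move=> r' hr' h'; apply: (meas_lt hr _ hr' h' _ hy hyu).
      - by move=> y' x _ _; rewrite /NP has_rcons => ->; rewrite orbT.
      - by rewrite mem_rcons mem_head.
      - by rewrite size_rcons.
  + have ek : size P = k by lia.
    have sP' : size (behead (rcons P u)) = size P by rewrite size_behead size_rcons.
    have nthP' : forall j, nth x0 (behead (rcons P u)) j =
        if j.+1 < size P then nth x0 P j.+1 else if j.+1 == size P then u else x0.
      by move=> j; rewrite nth_behead nth_rcons.
    have uP' : u \in behead (rcons P u).
      have hu' : nth x0 (behead (rcons P u)) (size P).-1 = u.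
        by rewrite nthP' ifF ?ifT //; [apply/eqP|]; rewrite -subn1; lia.
      rewrite -{1}hu'; apply: mem_nth; rewrite sP' -subn1; lia.
    have bnd : forall y' x, y' \in region P r -> e y' x -> NP P x ->
        NP (behead (rcons P u)) x.
      move=> y' x hy' hyx hx.
      have [xP [i0 hi0 hix]] := boundary hr hy' hyx hx.
      case: (classic (exists2 j, 0 < j < size P & e (nth x0 P j) x)) => [[j hj hjx]|hno].
        move/andP: hj => [hj1 hj2].
        have h3 : j.-1 < size (behead (rcons P u)).
          rewrite sP'; exact: leq_ltn_trans (leq_pred j) hj2.
        apply: (NP_of h3).
        rewrite nthP' prednK // hj2.
        by rewrite hjx orbT.
      case: (boolP ((u == x) || e u x)) => hux.
        have h3 : (size P).-1 < size (behead (rcons P u)) by rewrite sP' ltn_predL.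
        apply: (NP_of h3).
        by rewrite nthP' prednK // ltnn eqxx.
      exfalso.
      have hY : forall z, ~~ NP P z -> forall i, i < size P ->
          (nth x0 P i != z) && ~~ e (nth x0 P i) z.
        move=> z hz i hi; apply/andP; split; apply/negP => h; move/negP: hz; apply;
        by apply: (NP_of hi); rewrite h ?orbT.
      have hxi : forall i, i < size P -> e (nth x0 P i) x = (i == 0).
        move=> i hi; case: (posnP i) => [->|hpos].
        - case: (posnP i0) => [h0|h0]; first by rewrite -h0.
          by exfalso; apply: hno; exists i0 => //; rewrite h0.
        - apply/negP => hh; apply: hno; exists i => //; by rewrite hpos.
      have ux : u != x by move: hux; case: eqP.
      have [sc [hsc hsz]] : exists s, induced_cycle e s /\ (size P).+2 <= size s.
        apply: (cycle_of (Y := fun z => ~~ NP P z)) iP sP hY xP uP ux hxi hu _.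
        apply: (walk_exists (f := eP P) (a := y) (b := y')).
        - by move=> ? ? /and3P[-> _ ->].
        - by rewrite esym.
        - exact: hyx.
        - exact: region_notNP hr hy.
        - move: hy hy'; rewrite !inE => hy hy'.
          rewrite (sym_connect_sym (eP_sym P)) in hy.
          exact: connect_trans hy hy'.
      have := nocyc hsc; rewrite ek in hsz.
      by rewrite ltnNge hsz.

    apply: (step (P' := behead (rcons P u))) hI _ (ipath_behead iPu) _ _ _ (bnd) _ (IH _).
    * move=> i; rewrite !place_nth ?sP' // nthP'.
      have hi := ltn_ord i.
      right; rewrite (_ : minn i (size P).-1 = i); last by rewrite -subn1; lia.
      case: ifP => h1.
      - by case: iP => _ ->; rewrite ?eqxx //; lia.
      - rewrite ifT; last by apply/eqP; lia.
        by rewrite (_ : nat_of_ord i = (size P).-1) //; rewrite -subn1; lia.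
    * by rewrite sP'.
    * by rewrite sP'.
    * by move=> p /mem_behead; rewrite mem_rcons inE => /orP[/eqP->|/cP].
    * move=> r' hr' h'; apply: (meas_lt hr bnd hr' h' uP' hy hyu).
      by rewrite sP'.
- have st : 1 < size P.
    case: (ltnP 1 (size P)) => // h1.
    have e1 : size P = 1 by apply/eqP; rewrite eqn_leq h1 sP.
    exfalso.
    have c0 : connect e (nth x0 P 0) r.
      have := cPi 0 sP; rewrite (sym_connect_sym esym) => h.
      exact: connect_trans h cr.
    have n0 : nth x0 P 0 \notin region P r.
      apply/negP => /(region_notNP hr); rewrite (NP_of sP) //; by rewrite eqxx.
    have rR : r \in region P r by rewrite inE connect0.
    have [y [x [hy hx hyx]]] := bnd_exists c0 n0 rR.
    have hxN : NP P x.
      apply/negPn/negP => hn; move/negP: hx; apply; exact: region_closed hr hy hyx hn.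
    have [_ [i hi hix]] := boundary hr hy hyx hxN.
    apply: hnex; exists x, y; split => //.
    + by move: hix; rewrite e1; move: hi; rewrite e1; case: i.
    + by move=> j; rewrite e1.
  set P' := take (size P).-1 P.
  have sP' : size P' = (size P).-1 by rewrite size_take ltn_predL sP.
  have bnd : forall y' x, y' \in region P r -> e y' x -> NP P x -> NP P' x.
    move=> y' x hy' hyx hx.
    have [xP [i hi hix]] := boundary hr hy' hyx hx.
    case: (ltnP i (size P).-1) => hi1.
      apply: (NP_of (i := i)); first by rewrite sP'.
      by rewrite /P' nth_take // hix orbT.
    have ei : i = (size P).-1.
      by apply/eqP; rewrite eqn_leq hi1 andbT -ltnS prednK.
    case: (classic (exists2 j, j < (size P).-1 & e (nth x0 P j) x)) => [[j hj hjx]|hno].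
      apply: (NP_of (i := j)); first by rewrite sP'.
      by rewrite /P' nth_take // hjx orbT.
    exfalso; apply: hnex; exists x, y'; split => //; first by rewrite -ei.
    by move=> j hj; apply/negP => hjx; apply: hno; exists j.
  have sPP : size P' < size P by rewrite sP' ltn_predL.
  apply: (step (P' := P')) hI _ (ipath_take _ iP) _ _ _ (bnd) _ (IH _).
  + move=> i; rewrite !place_nth ?sP' //; last by rewrite -subn1; lia.
    case: (ltnP i (size P).-1) => hi.
    * left; rewrite /P' nth_take; last by rewrite -!subn1; lia.
      congr nth; rewrite -!subn1; lia.
    * right; rewrite /P' nth_take; last by rewrite -!subn1; lia.
      have -> : minn i (size P).-2 = (size P).-2 by rewrite -!subn1; lia.
      have h2 : (size P).-1 = (size P).-2.+1 by rewrite -!subn1; lia.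
      case: iP => _ ->; [by apply/orP; right; apply/eqP | by rewrite -subn1; lia | by rewrite -!subn1; lia].
  + by rewrite sP' -subn1; lia.
  + by rewrite sP' -subn1; lia.
  + by move=> p /mem_take /cP.
  + move=> r' hr' h'; exact: meas_le hr bnd hr' sPP.
Qed.

End Proof.

Lemma min_cop (T : finType) (e : rel T) (S : {set T}) m :
  1 <= m -> cops_win_on e m S -> exists2 n, n <= m & is_cop_number_on e S n.
Proof.
elim/ltn_ind: m => m IHm hm hw.
case: (classic (exists j, (1 <= j < m) /\ cops_win_on e j S)) => [[j [hj hw']]|hno].
- move/andP: hj => [hj1 hj2].
  have [n hn hc] := IHm j hj2 hj1 hw'.
  by exists n => //; apply: leq_trans hn (ltnW hj2).
- by exists m => //; split => // j hj hw'; apply: hno; exists j; split.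
Qed.

Theorem proposition3 (l : nat) (T : finType) (e : rel T) :
  3 <= l -> symmetric e -> irreflexive e ->
  (forall s : seq T, induced_cycle e s -> size s < l) ->
  cop_number_le e (l - 2).
Proof.
move=> hl esym eirr hcyc v.
set k := l - 2.
have hk : 0 < k by rewrite /k; lia.
have nocyc : forall s, induced_cycle e s -> size s < k.+2.
  by move=> s /hcyc; rewrite /k; lia.
apply: min_cop => //.
have pv : forall i, place v k [:: v] i = v.
  move=> i; rewrite ffunE /=; case: (nat_of_ord i) => [|n] //=.
  by case: n.
exists (place v k [:: v]); split.
- by move=> i; rewrite pv inE connect0.
move=> r; rewrite inE => hr.
case: (boolP (NP e [:: v] r)) => h.
  by apply: capture.
right; apply: (strategy (x0 := v) esym eirr nocyc (n := (meas e k [:: v] r).+1) (v0 := v)).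
  by [].
split => //.
- split => // i j; rewrite /= !ltnS !leqn0 => /eqP-> /eqP->.
  by rewrite /= eirr.
- by move=> p; rewrite inE => /eqP->; rewrite connect0.
Qed.
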